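(* Let $n$ be a positive integer, let $\dot C_t$ be a colored chain on $t$ vertices, and let $\alpha=\alpha(\dot C_t)$. Then $$\tilde{R}(\dot C^{(rbr)}_{\alpha},Q_n)\le \tilde{R}(\dot C_t,Q_n)\le \tilde{R}(\dot C^{(rbr)}_{\alpha},Q_n)+t-\alpha.$$
   Context: A chain $C_t$ is a poset on $t$ pairwise comparable vertices; a colored chain has each vertex colored blue or red. The red-alternating chain $\dot C_a^{(rbr)}$ is $C_a$ colored alternately red and blue starting with a red minimal vertex; the blue-alternating chain $\dot C_a^{(brb)}$ is colored alternately starting with a blue minimal vertex. For a colored chain $\dot C$, $\alpha(\dot C)$ is the maximum $a$ such that $\dot C$ contains a copy of $\dot C_a^{(rbr)}$ or of $\dot C_a^{(brb)}$ (i.e. a subchain of $a$ vertices colored in that way). $Q_N$ is the Boolean lattice of all subsets of an $N$-element set ordered by inclusion. In a blue/red coloring of $Q_N$, a copy of a colored poset $\dot P$ is an induced subposet isomorphic to $P$ with matching colors. The poset Erdős–Hajnal number $\tilde{R}(\dot P,Q_n)$ is the minimum $N$ such that every blue/red coloring of $Q_N$ contains a copy of $\dot P$ or a monochromatic induced copy of $Q_n$. *)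

(* Defs.v *)
From Stdlib Require Import ClassicalEpsilon.
From mathcomp Require Import all_boot.
Set Implicit Arguments. Unset Strict Implicit. Unset Printing Implicit Defensive.

(* Colors: true = red, false = blue.
   A colored chain on t vertices is a  c : seq bool  of size t, listing the
   colors from the minimal vertex (head) to the maximal vertex (last). *)

Definition alt_chain (b : bool) (a : nat) : seq bool :=
  mkseq (fun i => if odd i then ~~ b else b) a.

Definition rbr (a : nat) : seq bool := alt_chain true a.
Definition brb (a : nat) : seq bool := alt_chain false a.

(* alpha(C): max a such that C contains a subchain colored as C_a^(rbr) or C_a^(brb).
   Subchains of a chain are exactly subsequences (subseq). *)
Definition alpha (c : seq bool) : nat :=
  \max_(a < (size c).+1 | subseq (rbr a) c || subseq (brb a) c) (a : nat).

(* Q_N = subsets of 'I_N ordered by inclusion; a blue/red coloring is a map to bool. *)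
Definition coloring (N : nat) := {set 'I_N} -> bool.

(* A copy of the colored chain c: a strictly increasing (by inclusion) sequence of
   subsets of the right length whose colors match c (any set of pairwise comparable
   distinct vertices induces a chain). *)
Definition has_chain_copy (N : nat) (col : coloring N) (c : seq bool) : Prop :=
  exists s : seq {set 'I_N},
    [/\ size s = size c, sorted (fun A B : {set 'I_N} => A \proper B) s & map col s = c].

(* A monochromatic induced copy of Q_n: an order embedding of Q_n into Q_N
   (f X ⊆ f Y iff X ⊆ Y) whose image is monochromatic. *)
Definition has_mono_Qn (N : nat) (col : coloring N) (n : nat) : Prop :=
  exists (f : {set 'I_n} -> {set 'I_N}) (b : bool),
    (forall X Y, (f X \subset f Y) = (X \subset Y)) /\ (forall X, col (f X) = b).

Definition EH_good (c : seq bool) (n N : nat) : Prop :=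
  forall col : coloring N, has_chain_copy col c \/ has_mono_Qn col n.

Definition EH_goodb (c : seq bool) (n N : nat) : bool :=
  if excluded_middle_informative (EH_good c n N) then true else false.

(* The poset Erdős–Hajnal number  R~(c, Q_n): the minimum N with EH_good
   (set to 0 by convention if no such N exists). *)
Definition EH_number (c : seq bool) (n : nat) : nat :=
  match excluded_middle_informative (exists N, EH_goodb c n N) with
  | left ex => ex_minn ex
  | right _ => 0
  end.

(* Main.v *)
Require Import Defs.
From Stdlib Require Import ClassicalEpsilon.
From mathcomp Require Import all_boot.
Set Implicit Arguments. Unset Strict Implicit. Unset Printing Implicit Defensive.

Definition prop (U : finType) := fun A B : {set U} => A \proper B.

Definition chainU (U : finType) (col : {set U} -> bool) (c : seq bool) : Prop :=
  exists s : seq {set U}, [/\ size s = size c, pairwise (@prop U) s & map col s = c].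
Definition monoU (U : finType) (col : {set U} -> bool) (n : nat) : Prop :=
  exists (f : {set 'I_n} -> {set U}) (b : bool),
    (forall X Y, (f X \subset f Y) = (X \subset Y)) /\ (forall X, col (f X) = b).
Definition goodU (c : seq bool) (n : nat) (U : finType) : Prop :=
  forall col : {set U} -> bool, chainU col c \/ monoU col n.

Lemma prop_trans (U : finType) : transitive (@prop U).
Proof. move=> A B C; exact: proper_trans. Qed.

Lemma goodE c n N : EH_good c n N <-> goodU c n 'I_N.
Proof.
split=> H col; case: (H col) => [[s [H1 H2 H3]]|Hm]; (try by right);
  left; exists s; split=> //.
  by rewrite -sorted_pairwise //; exact: prop_trans.
by rewrite sorted_pairwise //; exact: prop_trans.
Qed.

Lemma good_inj c n (U V : finType) (g : U -> V) : injective g ->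
  goodU c n U -> goodU c n V.
Proof.
move=> ginj HU col.
pose G := fun X : {set U} => g @: X.
have GS : forall X Y, (G X \subset G Y) = (X \subset Y).
  move=> X Y; apply/idP/idP; last exact: imsetS.
  move/subsetP=> H; apply/subsetP=> x xX.
  have : g x \in G Y by apply: H; apply: imset_f.
  by case/imsetP=> y yY /ginj ->.
have GP : forall X Y, prop (G X) (G Y) = prop X Y.
  by move=> X Y; rewrite /prop !properE !GS.
case: (HU (fun X => col (G X))) => [[s [H1 H2 H3]]|[f [b [Hf Hb]]]].
  left; exists (map G s); split.
  - by rewrite size_map.
  - by rewrite pairwise_map; apply: sub_pairwise H2 => x y /=; rewrite GP.
  - by rewrite -map_comp.
right; exists (fun X => G (f X)), b; split=> // X Y; by rewrite GS.
Qed.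

Lemma good_card c n (U V : finType) : #|U| <= #|V| -> goodU c n U -> goodU c n V.
Proof.
move=> H; apply: (@good_inj c n U V (fun u => enum_val (widen_ord H (enum_rank u)))).
move=> x y /enum_val_inj /(congr1 val) /= /val_inj; exact: enum_rank_inj.
Qed.

Lemma good_neg c n U : goodU c n U -> goodU (map negb c) n U.
Proof.
move=> H col; case: (H (fun X => ~~ col X)) => [[s [H1 H2 H3]]|[f [b [Hf Hb]]]].
  left; exists s; split=> //; first by rewrite size_map.
  by rewrite -H3 -map_comp; apply: eq_map => x /=; rewrite negbK.
right; exists f, (~~ b); split=> // X; by rewrite -(Hb X) negbK.
Qed.

Lemma good_subseq c d n U : subseq d c -> goodU c n U -> goodU d n U.
Proof.
case/subseqP=> m Hm -> H col; case: (H col) => [[s [H1 H2 H3]]|Hmo]; last by right.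
left; exists (mask m s); split.
- by rewrite !size_mask // H1.
- by apply: pairwise_mask.
- by rewrite map_mask H3.
Qed.

Definition ext (U : finType) (bit : bool) (X : {set U}) : {set option U} :=
  [set o | if o is Some u then u \in X else bit].

Lemma ext_sub (U : finType) b b' (X Y : {set U}) :
  (ext b X \subset ext b' Y) = (b ==> b') && (X \subset Y).
Proof.
apply/idP/idP.
  move/subsetP=> H; apply/andP; split.
    apply/implyP=> hb; have := H None; rewrite !inE; exact.
  apply/subsetP=> x xX; have := H (Some x); rewrite !inE; exact.
case/andP=> /implyP Hb /subsetP HX; apply/subsetP=> [[u|]]; rewrite !inE.
  exact: HX.
exact: Hb.
Qed.

Lemma ext_prop (U : finType) b b' (X Y : {set U}) :
  prop (ext b X) (ext b' Y) = ((b ==> b') && (X \subset Y)) && ~~ ((b' ==> b) && (Y \subset X)).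
Proof. by rewrite /prop properE !ext_sub. Qed.

Lemma good_dup p b q n (U : finType) :
  goodU (p ++ b :: q) n U -> goodU (p ++ b :: b :: q) n (option U).
Proof.
move=> H col.
pose P (X : {set U}) := exists W : seq {set U}, [/\ size W = (size p).+1, pairwise (@prop U) W,
   all (fun w : {set U} => w \subset X) W & map (fun w : {set U} => col (ext false w)) W = rcons p b].
pose pb (X : {set U}) := if excluded_middle_informative (P X) then true else false.
have pbE X : pb X = true <-> P X.
  by rewrite /pb; case: excluded_middle_informative.
have Pup (X Y : {set U}) : X \subset Y -> P X -> P Y.
  move=> XY [W [W1 W2 W3 W4]]; exists W; split=> //.
  apply/allP=> w /(allP W3) wX; exact: subset_trans wX XY.
pose h (X : {set U}) := ext (pb X) X.
have hS (X Y : {set U}) : (h X \subset h Y) = (X \subset Y).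
  rewrite ext_sub; case XY: (X \subset Y); rewrite ?andbF ?andbT //.
  apply/implyP => /pbE HX; apply/pbE; exact: Pup XY HX.
case: (H (fun X => col (h X))) => [[s [H1 H2 H3]]|[f [b' [Hf Hb]]]]; last first.
  right; exists (fun X => h (f X)), b'; split => // X Y; by rewrite hS.
left.
have lt : size p < size s by rewrite H1 size_cat /= addnS ltnS leq_addr.
set s1 := take (size p) s. set x := nth set0 s (size p). set s2 := drop (size p).+1 s.
have Es : s = s1 ++ x :: s2 by rewrite /s1 /x /s2 -drop_nth // cat_take_drop.
have sz1 : size s1 = size p by rewrite /s1 size_takel // ltnW.
rewrite Es map_cat /= in H3.
move/eqP: H3; rewrite eq_sym eqseq_cat; last by rewrite size_map.
case/andP=> /eqP E1 /eqP [E2 E3].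
rewrite Es pairwise_cat /= in H2.
case/and4P: H2 => A12 P1 Ax2 P2.
have subx : forall w, w \in s1 -> w \subset x.
  move=> w ws; have := allrelP A12 w x ws (mem_head _ _).
  by rewrite /prop => /proper_sub.
have Px : P x.
  case Ex: (pb x); first by apply/pbE.
  exfalso.
  have Ew : forall w, w \in s1 -> pb w = false.
    move=> w ws; case Ew: (pb w) => //.
    move/pbE: Ew => /(Pup _ _ (subx w ws)) /pbE; by rewrite Ex.
  have : pb x = true; last by rewrite Ex.
  apply/pbE; exists (rcons s1 x); split.
  - by rewrite size_rcons sz1.
  - rewrite -cats1 pairwise_cat /= andbT P1 andbT.
    apply/allrelP=> w y ws; rewrite inE => /eqP ->.
    exact: (allrelP A12 w x ws (mem_head _ _)).
  - rewrite all_rcons subxx /=; apply/allP=> w ws; exact: subx.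
  - rewrite map_rcons E1; congr rcons; last by rewrite E2 /h Ex.
    by apply/eq_in_map => w ws /=; rewrite /h Ew.
case: Px => W [W1 W2 W3 W4].
have Ey : forall y, y \in x :: s2 -> pb y = true.
  move=> y; rewrite inE => /orP [/eqP ->|ys]; apply/pbE; first by exists W.
  apply: (Pup x); last by exists W.
  exact: proper_sub (allP Ax2 y ys).
exists (map (ext false) W ++ map (ext true) (x :: s2)); split.
- rewrite [LHS]size_cat !size_map W1 /= size_cat /= E3 size_map.
  by rewrite addSn !addnS.
- rewrite pairwise_cat; apply/and3P; split.
  + apply/allrelP=> u v /mapP [w ws ->] /mapP [y ys ->].
    rewrite ext_prop /= andbT.
    apply: subset_trans (allP W3 w ws) _.
    move: ys; rewrite inE => /orP [/eqP ->|ys] //.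
    exact: proper_sub (allP Ax2 y ys).
  + rewrite pairwise_map; apply: sub_pairwise W2 => u v /=.
    by rewrite ext_prop /prop properE.
  + have Pxs : pairwise (@prop U) (x :: s2) by rewrite /= Ax2 P2.
    rewrite pairwise_map; apply: sub_pairwise Pxs => u v /=.
    by rewrite ext_prop /prop properE.
- rewrite map_cat -!map_comp W4.
  have -> : map (col \o ext true) (x :: s2) = b :: q.
    rewrite E2 E3 -map_cons; apply/eq_in_map => y ys /=.
    by rewrite /h Ey.
  by rewrite cat_rcons.
Qed.

Fixpoint compress (s : seq bool) : seq bool :=
  match s with
  | x :: s' => match s' with
               | y :: _ => if x == y then compress s' else x :: compress s'
               | [::] => [:: x]
               end
  | [::] => [::]
  end.

Definition neqr := fun x y : bool => x != y.

Lemma compress_cons x y s :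
  compress (x :: y :: s) = if x == y then compress (y :: s) else x :: compress (y :: s).
Proof. by []. Qed.

Lemma compress_head x s : compress (x :: s) = x :: behead (compress (x :: s)).
Proof.
elim: s x => [|y s IH] x //; rewrite compress_cons.
by case: eqP => [->|] //; rewrite -IH.
Qed.

Lemma compress_subseq s : subseq (compress s) s.
Proof.
elim: s => [|x [|y s] IH]; [by [] | by rewrite /= eqxx | ].
rewrite compress_cons; case: eqP => _.
  exact: subseq_trans IH (subseq_cons _ _).
by rewrite /= eqxx.
Qed.

Lemma compress_sorted s : sorted neqr (compress s).
Proof.
elim: s => [|x [|y s] IH] //; rewrite compress_cons; case: eqP => // /eqP nxy.
move: IH; rewrite (compress_head y s) /= => ->; by rewrite andbT.
Qed.

Lemma altS e a : alt_chain e a.+1 = e :: alt_chain (~~ e) a.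
Proof.
rewrite /alt_chain /mkseq /= -[1]addn0 iotaDl -map_comp; congr (_ :: _).
by apply: eq_map => i /=; case: (odd i); case: e.
Qed.

Lemma alt_size e a : size (alt_chain e a) = a.
Proof. by rewrite size_mkseq. Qed.

Lemma alt_sorted e a : sorted neqr (alt_chain e a).
Proof.
elim: a e => [|a IH] e //; rewrite altS.
case: a IH => [|a] IH //; move: (IH (~~ e)); rewrite altS /= => ->.
by rewrite /neqr; case: e.
Qed.

Lemma sorted_alt s : sorted neqr s -> s = alt_chain (head true s) (size s).
Proof.
elim: s => [|x s IH] //= Hs; rewrite altS; congr (_ :: _).
case: s IH Hs => [|y s] IH //= /andP [nxy Hs].
have ey : y = ~~ x by move: nxy; rewrite /neqr; destruct x, y.
by rewrite (IH Hs) /= ey.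
Qed.

Lemma subseqE (z x : bool) s c : subseq (z :: s) (x :: c) = if z == x then subseq s c else subseq (z :: s) c.
Proof. by rewrite /=; case: (z == x). Qed.

Lemma subseq_dup (s c : seq bool) x : sorted neqr s -> subseq s (x :: x :: c) -> subseq s (x :: c).
Proof.
case: s => [|z s] // Hs.
rewrite (subseqE z x s (x :: c)) (subseqE z x s c).
case: eqP => [zx|_] H //; subst z.
case: s Hs H => [|w s] Hs H; first exact: sub0seq.
move: Hs => /= /andP [nzw _].
move: H; rewrite (subseqE w x s c).
case: eqP => // wx; move: nzw; rewrite wx /neqr; by destruct x.
Qed.

Lemma subseq_compress c s : sorted neqr s -> subseq s c -> subseq s (compress c).
Proof.
elim: c s => [|x [|y c] IH] s Hs //; rewrite compress_cons.
case: eqP => [->|nxy] Hsub.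
  by apply: IH => //; apply: subseq_dup.
case: s Hs Hsub => [|z s] // Hs.
rewrite (subseqE z x s (y :: c)) (subseqE z x s (compress (y :: c))).
case: eqP => [zx|nzx] Hsub.
  apply: IH => //; exact: path_sorted Hs.
exact: IH.
Qed.

Lemma alpha_compress c : alpha c = size (compress c).
Proof.
rewrite /alpha; apply/eqP; rewrite eqn_leq; apply/andP; split.
  apply/bigmax_leqP => a /orP [] H.
    by rewrite -{1}(alt_size true a) size_subseq // subseq_compress // alt_sorted.
  by rewrite -{1}(alt_size false a) size_subseq // subseq_compress // alt_sorted.
have Hk : size (compress c) < (size c).+1 by rewrite ltnS size_subseq // compress_subseq.
apply: (@leq_bigmax_cond _ _ (fun a : 'I_(size c).+1 => nat_of_ord a) (Ordinal Hk)) => /=.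
have := compress_subseq c; rewrite {1}(sorted_alt (compress_sorted c)).
by rewrite /rbr /brb; case: (head _ _) => ->; rewrite ?orbT.
Qed.

Lemma brb_neg a : brb a = map negb (rbr a).
Proof. by rewrite /brb /rbr /alt_chain /mkseq -map_comp; apply: eq_map => i /=; case: (odd i). Qed.

Lemma up n c : forall p (U V : finType), goodU (p ++ compress c) n U ->
  #|U| + (size c - size (compress c)) <= #|V| -> goodU (p ++ c) n V.
Proof.
elim: c => [|x [|y c] IH] p U V HU HV.
- by move: HV; rewrite subnn addn0 => HV; exact: good_card HV HU.
- by move: HV; rewrite subnn addn0 => HV; exact: good_card HV HU.
have Hle : size (compress (y :: c)) <= size (y :: c) by rewrite size_subseq // compress_subseq.
move: HU HV; rewrite compress_cons; case: eqP => [->|nxy] HU HV.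
  set d := size (y :: c) - size (compress (y :: c)).
  have H1 : goodU (p ++ y :: c) n (ordinal (#|U| + d)).
    by apply: IH HU _; rewrite card_ord.
  have H2 := good_dup H1.
  apply: good_card H2; rewrite card_option card_ord.
  by move: HV; rewrite /d [size (y :: y :: c)]/= subSn // addnS.
rewrite -cat_rcons; apply: (IH (rcons p x) U V); first by rewrite cat_rcons.
by move: HV; rewrite [size (x :: _ :: _)]/= [size (x :: compress _)]/= subSS.
Qed.

Lemma EH_goodbP c n N : EH_goodb c n N = true <-> EH_good c n N.
Proof. by rewrite /EH_goodb; case: excluded_middle_informative. Qed.

Lemma EH_min c n N : EH_good c n N -> EH_number c n <= N /\ EH_good c n (EH_number c n).
Proof.
move=> H; rewrite /EH_number; case: excluded_middle_informative => [ex|nex]; last first.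
  by exfalso; apply: nex; exists N; apply/EH_goodbP.
case: ex_minnP => m Hm Hmin; split; last by apply/EH_goodbP.
by apply: Hmin; apply/EH_goodbP.
Qed.

Lemma EH_none c n : (forall N, ~ EH_good c n N) -> EH_number c n = 0.
Proof.
move=> H; rewrite /EH_number; case: excluded_middle_informative => // [[N HN]].
by exfalso; apply: (H N); apply/EH_goodbP.
Qed.

Lemma compress_alt c : compress c = alt_chain (head true (compress c)) (alpha c).
Proof. by rewrite alpha_compress -sorted_alt // compress_sorted. Qed.

Lemma L1 c n N : EH_good c n N -> EH_good (rbr (alpha c)) n N.
Proof.
move/goodE => H; apply/goodE.
have := good_subseq (compress_subseq c) H; rewrite compress_alt.
case: (head _ _) => //; rewrite -/(brb _) brb_neg => /good_neg.
by rewrite (mapK negbK).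
Qed.

Lemma L2 c n M : EH_good (rbr (alpha c)) n M -> EH_good c n (M + (size c - alpha c)).
Proof.
move/goodE => H; apply/goodE.
have H' : goodU ([::] ++ compress c) n (ordinal M).
  rewrite /= compress_alt; case: (head _ _) => //.
  by rewrite -/(brb _) brb_neg; apply: good_neg.
have := @up n c [::] _ (ordinal (M + (size c - alpha c))) H'.
by rewrite !card_ord -alpha_compress; apply.
Qed.

Theorem theorem4 (n : nat) (c : seq bool) :
  0 < n ->
  EH_number (rbr (alpha c)) n <= EH_number c n /\
  EH_number c n <= EH_number (rbr (alpha c)) n + (size c - alpha c).
Proof.
move=> _; split.
  case: (excluded_middle_informative (exists N, EH_good c n N)) => [[N HN]|nN].
    have [_ Hg] := EH_min HN; have [Hle _] := EH_min (L1 Hg); exact: Hle.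
  rewrite (@EH_none c) ?(@EH_none (rbr (alpha c))) //.
    by move=> N HN; apply: nN; exists (N + (size c - alpha c)); exact: L2.
  by move=> N HN; apply: nN; exists N.
case: (excluded_middle_informative (exists M, EH_good (rbr (alpha c)) n M)) => [[M HM]|nM].
  have [_ Hg] := EH_min HM; have [Hle _] := EH_min (L2 Hg); exact: Hle.
rewrite (@EH_none c) //.
by move=> N HN; apply: nM; exists N; exact: L1.
Qed.
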